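(* Let $G$ be a multiplicative monoid with identity, let $N$ be a $G$-graded near-ring, and let $P$ be a graded weakly prime ideal of $N$. If $P$ is not a graded prime ideal of $N$, then $P^2 \cap N = \{0\}$.
   Context: A near-ring $(N,+,\cdot)$ is a set with two binary operations such that $(N,+)$ is a group (not necessarily abelian), $(N,\cdot)$ is a semigroup, and $(a+b)y = ay+by$ for all $a,b,y\in N$. For a multiplicative monoid $G$ with identity, $N$ is a $G$-graded near-ring if there is a family $\{N_\sigma\}_{\sigma\in G}$ of additive normal subgroups of $N$ with $N=\bigoplus_{\sigma\in G}N_\sigma$ and $N_\sigma N_\tau\subseteq N_{\sigma\tau}$ for all $\sigma,\tau\in G$. An ideal $P$ of $N$ is graded if $P=\bigoplus_{\sigma\in G}(P\cap N_\sigma)$. For ideals $I,J$, $IJ$ denotes their product, and $P^2=PP$ (the paper writes $P^2\cap N$). A graded ideal $P$ is graded prime if for all graded ideals $I,J$ of $N$ with $IJ\subseteq P$, either $I\subseteq P$ or $J\subseteq P$. A graded ideal $P$ is graded weakly prime if for all graded ideals $I,J$ of $N$ with $\{0\}\neq IJ\subseteq P$, either $I\subseteq P$ or $J\subseteq P$. *)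

(* Defs.v *)
From Stdlib Require Import List.
Import ListNotations.

Record Monoid := {
  mcar :> Type;
  mop : mcar -> mcar -> mcar;
  mone : mcar;
  mopA : forall a b c, mop a (mop b c) = mop (mop a b) c;
  mop1l : forall a, mop mone a = a;
  mop1r : forall a, mop a mone = a
}.

Record NearRing := {
  ncar :> Type;
  nadd : ncar -> ncar -> ncar;
  nopp : ncar -> ncar;
  nzero : ncar;
  nmul : ncar -> ncar -> ncar;
  naddA : forall a b c, nadd a (nadd b c) = nadd (nadd a b) c;
  nadd0l : forall a, nadd nzero a = a;
  nadd0r : forall a, nadd a nzero = a;
  naddNl : forall a, nadd (nopp a) a = nzero;
  naddNr : forall a, nadd a (nopp a) = nzero;
  nmulA : forall a b c, nmul a (nmul b c) = nmul (nmul a b) c;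
  nmulDl : forall a b y, nmul (nadd a b) y = nadd (nmul a y) (nmul b y)
}.

Section NearRingDefs.
Variable N : NearRing.

Definition nset := N -> Prop.

Definition nsum (l : list N) : N := fold_right (nadd N) (nzero N) l.

Definition add_subgroup (S : nset) : Prop :=
  S (nzero N) /\
  (forall x y, S x -> S y -> S (nadd N x y)) /\
  (forall x, S x -> S (nopp N x)).

Definition add_normal_subgroup (S : nset) : Prop :=
  add_subgroup S /\
  (forall n x, S x -> S (nadd N (nadd N n x) (nopp N n))).

(* Ideal of a (right) near-ring (Pilz): a normal subgroup I of (N,+) with
   I N ⊆ I and n(n'+i) - n n' ∈ I for all n, n' ∈ N, i ∈ I. *)
Definition nideal (I : nset) : Prop :=
  add_normal_subgroup I /\
  (forall i n, I i -> I (nmul N i n)) /\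
  (forall n n' i, I i -> I (nadd N (nmul N n (nadd N n' i)) (nopp N (nmul N n n')))).

Definition ideal_prod (I J : nset) : nset :=
  fun x => exists i j, I i /\ J j /\ x = nmul N i j.

Definition subset (A B : nset) : Prop := forall x, A x -> B x.

Variable G : Monoid.

(* N is a G-graded near-ring with homogeneous components Nf σ:
   each Nf σ is an additive normal subgroup, N = ⊕_σ Nf σ (internal direct
   sum: N is generated by the Nf σ and each Nf σ meets the subgroup generated
   by the other components trivially), and Nf σ Nf τ ⊆ Nf (στ). *)
Definition graded_nearring (Nf : G -> nset) : Prop :=
  (forall s, add_normal_subgroup (Nf s)) /\
  (forall x : N, exists l : list (G * N),
      (forall p, In p l -> Nf (fst p) (snd p)) /\ x = nsum (map snd l)) /\
  (forall (s : G) (x : N) (l : list (G * N)),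
      Nf s x ->
      (forall p, In p l -> fst p <> s /\ Nf (fst p) (snd p)) ->
      x = nsum (map snd l) -> x = nzero N) /\
  (forall s t x y, Nf s x -> Nf t y -> Nf (mop G s t) (nmul N x y)).

(* Graded ideal: P = ⊕_σ (P ∩ Nf σ). *)
Definition graded_ideal (Nf : G -> nset) (P : nset) : Prop :=
  nideal P /\
  (forall x, P x -> exists l : list (G * N),
      (forall p, In p l -> P (snd p) /\ Nf (fst p) (snd p)) /\
      x = nsum (map snd l)).

Definition graded_prime (Nf : G -> nset) (P : nset) : Prop :=
  graded_ideal Nf P /\
  forall I J, graded_ideal Nf I -> graded_ideal Nf J ->
    subset (ideal_prod I J) P -> subset I P \/ subset J P.

Definition graded_weakly_prime (Nf : G -> nset) (P : nset) : Prop :=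
  graded_ideal Nf P /\
  forall I J, graded_ideal Nf I -> graded_ideal Nf J ->
    (exists x, ideal_prod I J x /\ x <> nzero N) ->
    subset (ideal_prod I J) P -> subset I P \/ subset J P.

End NearRingDefs.

(* Main.v *)
Require Import Defs.
From Stdlib Require Import List Classical.
Import ListNotations.

Lemma add_cancel_l (N : NearRing) (a b c : N) : nadd N a b = nadd N a c -> b = c.
Proof.
  intro H. rewrite <- (nadd0l N b), <- (nadd0l N c), <- (naddNl N a), <- !naddA, H. reflexivity.
Qed.

Lemma opp_opp (N : NearRing) (a : N) : nopp N (nopp N a) = a.
Proof.
  apply (add_cancel_l N (nopp N a)). rewrite naddNr, naddNl. reflexivity.
Qed.

Lemma opp_add (N : NearRing) (a b : N) : nopp N (nadd N a b) = nadd N (nopp N b) (nopp N a).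
Proof.
  apply (add_cancel_l N (nadd N a b)). rewrite naddNr.
  rewrite !naddA, <- (naddA N a b), naddNr, nadd0r, naddNr. reflexivity.
Qed.

Lemma mul0l (N : NearRing) (y : N) : nmul N (nzero N) y = nzero N.
Proof.
  apply (add_cancel_l N (nmul N (nzero N) y)). rewrite <- nmulDl, !nadd0r. reflexivity.
Qed.

Lemma nsum_app (N : NearRing) (l1 l2 : list N) : nsum N (l1 ++ l2) = nadd N (nsum N l1) (nsum N l2).
Proof.
  induction l1 as [|a l IH]; simpl.
  - rewrite nadd0l. reflexivity.
  - unfold nsum in *. simpl. rewrite IH, naddA. reflexivity.
Qed.

Definition isum (N : NearRing) (I P : nset N) : nset N :=
  fun x => exists i p, I i /\ P p /\ x = nadd N i p.

Lemma isum_l (N : NearRing) (I P : nset N) : nideal N P -> forall x, I x -> isum N I P x.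
Proof. intros HP x Hx. exists x, (nzero N). destruct HP as [[[H0 _] _] _].
  repeat split; auto. rewrite nadd0r. reflexivity. Qed.

Lemma isum_r (N : NearRing) (I P : nset N) : nideal N I -> forall x, P x -> isum N I P x.
Proof. intros HI x Hx. exists (nzero N), x. destruct HI as [[[H0 _] _] _].
  repeat split; auto. rewrite nadd0l. reflexivity. Qed.

Lemma isum_ideal (N : NearRing) (I P : nset N) : nideal N I -> nideal N P -> nideal N (isum N I P).
Proof.
  intros HI HP.
  pose proof HI as [[[I0 [IA IN]] IC] [IM IX]].
  pose proof HP as [[[P0 [PA PN]] PC] [PM PX]].
  split; [split; [split; [|split]|]|split].
  - apply isum_l; auto.
  - intros x y [i [p [Hi [Hp ->]]]] [i' [p' [Hi' [Hp' ->]]]].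
    exists (nadd N i i'), (nadd N (nadd N (nadd N (nopp N i') p) (nopp N (nopp N i'))) p').
    repeat split; auto.
    rewrite opp_opp. rewrite !naddA. rewrite <- (naddA N i i' (nopp N i')), naddNr, nadd0r.
    reflexivity.
  - intros x [i [p [Hi [Hp ->]]]].
    exists (nopp N i), (nadd N (nadd N i (nopp N p)) (nopp N i)).
    repeat split; auto.
    rewrite opp_add, !naddA, naddNl, nadd0l. reflexivity.
  - intros n x [i [p [Hi [Hp ->]]]].
    exists (nadd N (nadd N n i) (nopp N n)), (nadd N (nadd N n p) (nopp N n)).
    repeat split; auto.
    rewrite !naddA. rewrite <- (naddA N _ (nopp N n) n), naddNl, nadd0r. reflexivity.
  - intros x n [i [p [Hi [Hp ->]]]].
    exists (nmul N i n), (nmul N p n). repeat split; auto. apply nmulDl.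
  - intros n n' x [i [p [Hi [Hp ->]]]].
    set (a := nadd N (nmul N n (nadd N (nadd N n' i) p)) (nopp N (nmul N n (nadd N n' i)))).
    set (b := nadd N (nmul N n (nadd N n' i)) (nopp N (nmul N n n'))).
    assert (Ha : P a) by (apply PX; auto).
    assert (Hb : I b) by (apply IX; auto).
    exists b, (nadd N (nadd N (nopp N b) a) (nopp N (nopp N b))).
    repeat split; auto.
    rewrite opp_opp, !naddA, naddNr, nadd0l.
    unfold a, b. rewrite !naddA. rewrite <- (naddA N _ (nopp N (nmul N n (nadd N n' i))) _), naddNl, nadd0r.
    reflexivity.
Qed.

Lemma isum_graded (G : Monoid) (N : NearRing) (Nf : G -> nset N) (I P : nset N) :
  graded_ideal N G Nf I -> graded_ideal N G Nf P -> graded_ideal N G Nf (isum N I P).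
Proof.
  intros [HI GI] [HP GP]. split; [apply isum_ideal; auto|].
  intros x [i [p [Hi [Hp ->]]]].
  destruct (GI i Hi) as [l1 [H1 E1]]. destruct (GP p Hp) as [l2 [H2 E2]].
  exists (l1 ++ l2). split.
  - intros q Hq. apply in_app_or in Hq as [Hq|Hq].
    + destruct (H1 q Hq). split; auto. apply isum_l; auto.
    + destruct (H2 q Hq). split; auto. apply isum_r; auto.
  - rewrite map_app, nsum_app, <- E1, <- E2. reflexivity.
Qed.

Theorem theorem1 (G : Monoid) (N : NearRing) (Nf : G -> nset N)
  (HN : graded_nearring N G Nf) (P : nset N)
  (HP : graded_weakly_prime N G Nf P)
  (Hnp : ~ graded_prime N G Nf P) :
  forall x : N, ideal_prod N P P x <-> x = nzero N.
Proof.
  destruct HP as [GP HW].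
  pose proof GP as [HPi _].
  pose proof HPi as [[[P0 [PA PN]] PC] [PM PX]].
  intro x. split.
  - intros [p [q [Hp [Hq ->]]]].
    destruct (classic (nmul N p q = nzero N)) as [E|Hne]; auto.
    exfalso. apply Hnp. split; [exact GP|].
    intros I J HI HJ HIJ.
    pose proof HI as [[[[I0 _] _] _] _].
    pose proof HJ as [[[[J0 _] _] _] _].
    destruct (HW (isum N I P) (isum N J P)) as [H|H].
    + apply isum_graded; auto.
    + apply isum_graded; auto.
    + exists (nmul N p q). split; auto.
      exists (nadd N (nzero N) p), (nadd N (nzero N) q).
      split; [|split].
      * apply isum_r; auto. destruct HI; auto.
      * apply isum_r; auto. destruct HJ; auto.
      * rewrite !nadd0l. reflexivity.
    + intros y [a [b [[i [p' [Hi [Hp' ->]]]] [[j [q' [Hj [Hq' ->]]]] ->]]]].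
      rewrite nmulDl. apply PA; [|apply PM; auto].
      assert (Hij : P (nmul N i j)) by (apply HIJ; exists i, j; auto).
      pose proof (PX i j q' Hq') as Hd.
      replace (nmul N i (nadd N j q')) with
        (nadd N (nadd N (nmul N i (nadd N j q')) (nopp N (nmul N i j))) (nmul N i j)).
      * apply PA; auto.
      * rewrite <- naddA, naddNl, nadd0r. reflexivity.
    + left. intros y Hy. apply H. exact (isum_l N _ P HPi y Hy).
    + right. intros y Hy. apply H. exact (isum_l N _ P HPi y Hy).
  - intros ->. exists (nzero N), (nzero N). repeat split; auto. symmetry. apply mul0l.
Qed.
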